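(* Let $G$ be a finite abelian group with $|G|>1$ and let $p(G)$ be the smallest prime dividing $|G|$. If $B\subset G$ is balanced, then $|B|\geqslant\log_2 p(G)+1$.
   Context: A set $B\subset G$ is balanced if for every $b\in B$ there exist distinct $b_1,b_2\in B$ with $2b=b_1+b_2$. *)

(* Defs.v *)
From mathcomp Require Import all_boot all_algebra.
From Stdlib Require Import Reals.
Set Implicit Arguments. Unset Strict Implicit. Unset Printing Implicit Defensive.
Import GRing.Theory.
Local Open Scope ring_scope.

Definition balanced (G : finZmodType) (B : {set G}) : Prop :=
  forall b, b \in B ->
    exists b1 b2, [/\ b1 \in B, b2 \in B, b1 != b2 & b *+ 2 = b1 + b2].

Definition log2 (x : R) : R := (ln x / ln 2)%R.

(* Main.v *)
Require Import Defs.
From mathcomp Require Import all_boot all_order all_algebra.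
From mathcomp.algebra_tactics Require Import ring lra.
Import Order.TTheory GRing.Theory Num.Theory.
Set Implicit Arguments. Unset Strict Implicit. Unset Printing Implicit Defensive.

Section MDet.
Local Open Scope ring_scope.
Variable F : realFieldType.

Lemma Mdiag_ge0 n (A : 'M[F]_n) :
  (forall i j, i != j -> A i j <= 0) ->
  (forall i, 0 <= \sum_j A i j) -> forall i, 0 <= A i i.
Proof.
move=> Hoff Hrow i; have := Hrow i; rewrite (bigD1 i) //=.
have : \sum_(j | j != i) A i j <= 0.
  by apply: sumr_le0 => j Hj; apply: Hoff; rewrite eq_sym.
move=> H1 H2; apply: le_trans H2 _; rewrite -{2}[A i i]addr0 lerD2l //.
Qed.

Lemma Mdet n (A : 'M[F]_n) :
  (forall i j, i != j -> A i j <= 0) ->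
  (forall i, 0 <= \sum_j A i j) ->
  0 <= \det A <= \prod_i A i i.
Proof.
elim: n A => [|n IH] A Hoff Hrow.
  by rewrite det_mx00 big_ord0 lexx ler01.
have Hd := Mdiag_ge0 Hoff Hrow.
have Hprod0 : 0 <= \prod_i A i i by apply: prodr_ge0 => i _; exact: Hd.
set a := A ord0 ord0.
have [a0|apos] := eqVneq a 0.
  have Hz : forall j, A ord0 j = 0.
    move=> j; have [->|nj] := eqVneq j ord0; first exact: a0.
    apply/eqP; rewrite eq_le Hoff 1?eq_sym //=.
    have := Hrow ord0; rewrite (bigD1 j) //= (bigD1 ord0) 1?eq_sym //= -/a a0 add0r.
    move=> H; rewrite -[A ord0 j]addr0; apply: le_trans H _; rewrite lerD2l.
    by apply: sumr_le0 => k /andP[_ k0]; apply: Hoff; rewrite eq_sym.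
  rewrite (expand_det_row _ ord0) big1 ?lexx ?Hprod0 // => j _.
  by rewrite Hz mul0r.
have agt0 : 0 < a by rewrite lt_def apos Hd.
pose A1 : 'M[F]_(1 + n) := A.
pose u := ursubmx A1. pose w := dlsubmx A1. pose A' := drsubmx A1.
pose S := A' - a^-1 *: (w *m u).
have HA : A1 = block_mx 1 0 (a^-1 *: w) 1 *m block_mx (ulsubmx A1) u 0 S.
  rewrite mulmx_block !mul1mx !mul0mx !addr0 -!scalemxAl.
  rewrite [X in w *m X]mx11_scalar mul_mx_scalar scalerA.
  have -> : ulsubmx A1 0 0 = a.
    rewrite !mxE /=.
    by have -> : lshift n (0 : 'I_1) = ord0 :> 'I_(1+n) by apply: val_inj.
  by rewrite mulVf // scale1r /S addrC subrK /w /u /A' submxK.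
have Hdet : \det A = a * \det S.
  rewrite -[A]/A1 HA det_mulmx (@det_lblock F 1 n) (@det_ublock F 1 n) !det1 !mul1r det_mx11.
  by rewrite !mxE /=; have -> : lshift n (0 : 'I_1) = ord0 :> 'I_(1+n) by apply: val_inj.
have l0 : lshift n (0 : 'I_1) = ord0 :> 'I_(1+n) by apply: val_inj.
have SE : forall i j, S i j = A (lift ord0 i) (lift ord0 j)
    - a^-1 * (A (lift ord0 i) ord0 * A ord0 (lift ord0 j)).
  move=> i j; rewrite !mxE big_ord1 !mxE /= l0 -!rshift1 //.
have Soff : forall i j, i != j -> S i j <= 0.
  move=> i j ij; rewrite SE; have h1 : A (lift ord0 i) (lift ord0 j) <= 0.
    by apply: Hoff; rewrite (inj_eq (@lift_inj _ ord0)).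
  have h2 : 0 <= a^-1 * (A (lift ord0 i) ord0 * A ord0 (lift ord0 j)).
    apply: mulr_ge0; first by rewrite invr_ge0 ltW.
    by apply: mulr_le0; apply: Hoff; rewrite // eq_sym.
  lra.
have Srow : forall i, 0 <= \sum_j S i j.
  move=> i; under eq_bigr do rewrite SE.
  rewrite sumrB -mulr_sumr -mulr_sumr.
  have h1 := Hrow (lift ord0 i); rewrite big_ord_recl in h1.
  have h2 := Hrow ord0; rewrite big_ord_recl -/a in h2.
  have hw : A (lift ord0 i) ord0 <= 0 by apply: Hoff.
  set U := \sum_(j < n) A ord0 (lift ord0 j) in h2 *.
  set R := \sum_(j < n) A (lift ord0 i) (lift ord0 j) in h1 *.
  set x := A (lift ord0 i) ord0 in h1 hw *.
  have h3 : x * (a + U) <= 0 by apply: mulr_le0_ge0.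
  have h4 : a^-1 * (x * (a + U)) <= 0.
    by apply: mulr_ge0_le0 => //; rewrite invr_ge0 ltW.
  rewrite mulrDr mulrDr mulrA [a^-1 * x]mulrC -mulrA mulVf // mulr1 in h4.
  lra.
have [HS1 HS2] := andP (IH S Soff Srow).
have HSd := Mdiag_ge0 Soff Srow.
rewrite Hdet big_ord_recl -/a; apply/andP; split.
  by apply: mulr_ge0 => //; apply: ltW.
apply: ler_wpM2l; first exact: ltW.
apply: le_trans HS2 _; apply: ler_prod => i _; rewrite HSd /= SE.
have h2 : 0 <= a^-1 * (A (lift ord0 i) ord0 * A ord0 (lift ord0 i)).
  apply: mulr_ge0; first by rewrite invr_ge0 ltW.
  by apply: mulr_le0; apply: Hoff; rewrite // eq_sym.
lra.
Qed.
End MDet.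
Section Dmat.
Local Open Scope ring_scope.
Variables (m : nat) (F1 F2 : 'I_m -> 'I_m) (ir : 'I_m).

Definition Dm : 'M[int]_m := \matrix_(i, j)
  if i == ir then (i == j)%:Z
  else (i == j)%:Z + (i == j)%:Z - (F1 i == j)%:Z - (F2 i == j)%:Z.

Lemma sum_delta (M : zmodType) (x : 'I_m -> M) k :
  \sum_j x j *~ (k == j)%:Z = x k.
Proof.
rewrite (bigD1 k) //= eqxx big1 ?addr0 // => j /negbTE.
by rewrite eq_sym => ->.
Qed.

Lemma Dm_row (M : zmodType) (x : 'I_m -> M) i :
  \sum_j x j *~ Dm i j =
  if i == ir then x i else x i *+ 2 - x (F1 i) - x (F2 i).
Proof.
under eq_bigr do rewrite mxE.
case: eqP => _; first exact: sum_delta.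
under eq_bigr do rewrite !mulrzBr mulrzDr.
by rewrite !sumrB big_split /= !sum_delta mulr2n.
Qed.

Lemma Dm_adj (M : zmodType) (y : 'I_m -> M) :
  (forall i, \sum_j y j *~ Dm i j = 0) -> forall k, y k *~ \det Dm = 0.
Proof.
move=> Hy k.
have : \sum_i (\sum_j y j *~ Dm i j) *~ \adj Dm k i = 0.
  by rewrite big1 // => i _; rewrite Hy mul0rz.
under eq_bigr do rewrite mulrz_suml.
rewrite exchange_big /=.
under eq_bigr do under eq_bigr do rewrite -mulrzA.
under eq_bigr do rewrite -mulrz_sumr.
have E : forall j, \sum_i Dm i j * \adj Dm k i = (\det Dm)%:M k j.
  move=> j; rewrite -mul_adj_mx mxE; apply: eq_bigr => i _; exact: mulrC.
under eq_bigr do rewrite E mxE.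
rewrite (bigD1 k) //= eqxx big1 ?addr0 // => j /negbTE; rewrite eq_sym => ->.
by rewrite mulr0n mulr0z.
Qed.

Hypothesis Hmin : forall X : {set 'I_m}, X != set0 ->
  (forall i, i \in X -> i != ir -> (F1 i \in X) && (F2 i \in X)) -> ir \in X.

Lemma maxprinc (z : 'I_m -> rat) : z ir = 0 ->
  (forall i, i != ir -> z i *+ 2 = z (F1 i) + z (F2 i)) -> forall j, z j <= 0.
Proof.
move=> z0 Hz j.
have [im _ Him] := @arg_maxP _ _ _ ir xpredT z isT.
pose X := [set i | z i == z im].
have : ir \in X.
  apply: Hmin.
    by apply/set0Pn; exists im; rewrite inE.
  move=> i; rewrite !inE => /eqP Hi nir.
  have h1 : z (F1 i) <= z im := Him (F1 i) isT.
  have h2 : z (F2 i) <= z im := Him (F2 i) isT.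
  have := Hz i nir; rewrite Hi mulr2n => h.
  by apply/andP; split; apply/eqP; lra.
rewrite inE z0 => /eqP h; have hj : z j <= z im := Him j isT; lra.
Qed.

Lemma Dm_det : exists n : nat, [/\ (0 < n)%N, (n <= 2 ^ m.-1)%N & \det Dm = n%:Z].
Proof.
pose Dq := map_mx (intr : int -> rat) Dm.
have DqE : forall i j, Dq i j = (Dm i j)%:~R by move=> i j; rewrite mxE.
have Hoff : forall i j, i != j -> Dq i j <= 0.
  move=> i j ij; rewrite DqE lerz0 mxE (negbTE ij); case: ifP => _ //.
  by rewrite add0r -opprD oppr_le0 addr_ge0.
have Hrow : forall i, 0 <= \sum_j Dq i j.
  move=> i; under eq_bigr do rewrite DqE.
  have := Dm_row (fun _ => 1 : rat) i; rewrite /= => ->.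
  case: ifP => _; lra.
have [H1 H2] := andP (Mdet Hoff Hrow).
have Hprod : \prod_i Dq i i <= 2 ^+ m.-1.
  have -> : (2 : rat) ^+ m.-1 = \prod_i (if i == ir then 1 else 2).
    rewrite (bigD1 ir) //= eqxx mul1r.
    rewrite (eq_bigr (fun _ => 2)); last by move=> i /negbTE ->.
    by rewrite prodr_const cardC1 card_ord.
  apply: ler_prod => i _; rewrite (Mdiag_ge0 Hoff Hrow) /= DqE mxE eqxx.
  case: ifP => _; first by rewrite lexx.
  rewrite -[2 : rat]/((2 : int)%:~R) ler_int.
  apply: (@le_trans _ _ ((true + true)%:Z)); last by [].
  by rewrite -addrA -opprD gerDl oppr_le0 addr_ge0.
have Hnz : \det Dq != 0.
  apply/negP; rewrite -det_tr => /det0P [v vn0 Hv].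
  pose z := fun j => v 0 j.
  have Hz : forall i, (if i == ir then z i else z i *+ 2 - z (F1 i) - z (F2 i)) = 0.
    move=> i; rewrite -(Dm_row z); have := congr1 (fun M : 'rV[rat]_m => M 0 i) Hv.
    rewrite !mxE => h; rewrite -[RHS]h; apply: eq_bigr => j _; rewrite !mxE mulrzr //.
  have z0 : z ir = 0 by have := Hz ir; rewrite eqxx.
  have Heq : forall i, i != ir -> z i *+ 2 = z (F1 i) + z (F2 i).
    by move=> i nir; have := Hz i; rewrite (negbTE nir) => h; apply/eqP; rewrite -subr_eq0 opprD addrA h.
  have A1 := maxprinc z0 Heq.
  have A2 : forall j, - z j <= 0.
    apply: (@maxprinc (fun j => - z j)); first by rewrite z0 oppr0.
    by move=> i nir /=; rewrite mulNrn (Heq i nir) opprD.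
  case/negP: vn0; apply/eqP/matrixP => i j; rewrite (ord1 i) mxE.
  have := A1 j; have := A2 j; rewrite /z; lra.
have Hdq : \det Dq = (\det Dm)%:~R by rewrite det_map_mx.
have Hpos : 0 < \det Dm.
  by rewrite -(@ltr0z rat) -Hdq lt_def Hnz H1.
have Habs : (`|\det Dm|%N)%:Z = \det Dm by rewrite gez0_abs // ltW.
have Hle : \det Dm <= (2 ^ m.-1)%N.
  rewrite -(@ler_int rat) -Hdq /= -pmulrn natrX; exact: le_trans H2 Hprod.
exists `|\det Dm|%N; split => //.
  by rewrite -ltz_nat Habs.
by rewrite -lez_nat Habs.
Qed.
End Dmat.

Section Grp.
Local Open Scope ring_scope.
Lemma order_bound (G : finZmodType) (g : G) n :
  g != 0 -> (0 < n)%N -> g *+ n = 0 -> (pdiv #|G| <= n)%N.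
Proof.
move=> gn0 npos gn.
have HN : g *+ #|G| = 0.
  have : \sum_(x : G) (g + x) = \sum_(x : G) x.
    by rewrite [RHS](reindex_inj (addrI g)).
  rewrite big_split /= sumr_const => h.
  by apply: (addIr (\sum_(x : G) x)); rewrite add0r -[in RHS]h.
have Gpos : (0 < #|G|)%N by apply/card_gt0P; exists 0.
have [a _ Ha] := Bezoutl n Gpos.
set d := gcdn #|G| n in Ha.
have Hd : g *+ d = 0.
  have h1 : g *+ (d + a * n) = 0.
    by case/dvdnP: Ha => c ->; rewrite mulnC mulrnA HN mul0rn.
  by rewrite mulrnDr mulnC mulrnA gn mul0rn addr0 in h1.
have d1 : (1 < d)%N.
  rewrite ltn_neqAle gcdn_gt0 npos orbT andbT; apply/negP => /eqP d1.
  by move: gn0; rewrite -d1 in Hd; rewrite mulr1n in Hd; rewrite Hd eqxx.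
apply: leq_trans (pdiv_min_dvd d1 (dvdn_gcdl _ _)) _.
exact: dvdn_leq npos (dvdn_gcdr _ _).
Qed.

Lemma zm (M : zmodType) (x r a b : M) : x *+ 2 = a + b -> (x - r) *+ 2 - (a - r) - (b - r) = 0.
Proof. move=> h; rewrite -addrA -opprD addrACA -opprD -mulr2n -h mulrnBl subrr //. Qed.

Lemma key (G : finZmodType) (S : {set G}) : S != set0 -> balanced S ->
  (forall X : {set G}, X \subset S -> X != set0 -> balanced X -> S \subset X) ->
  (pdiv #|G| <= 2 ^ (#|S|.-1))%N.
Proof.
move=> Sn0 Sb Smin.
case/set0Pn: Sn0 => r rS.
pose P b (pr : G * G) := [&& pr.1 \in S, pr.2 \in S, pr.1 != pr.2 & b *+ 2 == pr.1 + pr.2].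
pose f1 b := if [pick pr | P b pr] is Some pr then pr.1 else b.
pose f2 b := if [pick pr | P b pr] is Some pr then pr.2 else b.
have Hf : forall b, b \in S -> [/\ f1 b \in S, f2 b \in S, f1 b != f2 b & b *+ 2 = f1 b + f2 b].
  move=> b bS; rewrite /f1 /f2; case: pickP => [pr /and4P[h1 h2 h3 /eqP h4] // | none].
  have [b1 [b2 [h1 h2 h3 h4]]] := Sb b bS.
  by have := none (b1, b2); rewrite /P /= h1 h2 h3 h4 eqxx.
pose ev (i : 'I_#|S|) : G := enum_val i.
pose rk := enum_rank_in rS.
have evP : forall i, ev i \in S by move=> i; exact: enum_valP.
have evK : forall i, rk (ev i) = i by move=> i; exact: enum_valK_in.
have rkK : forall x, x \in S -> ev (rk x) = x by move=> x xS; exact: enum_rankK_in.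
pose F1 i := rk (f1 (ev i)). pose F2 i := rk (f2 (ev i)). pose ir := rk r.
have evF1 : forall i, ev (F1 i) = f1 (ev i) by move=> i; case: (Hf _ (evP i)) => h *; rewrite rkK.
have evF2 : forall i, ev (F2 i) = f2 (ev i) by move=> i; case: (Hf _ (evP i)) => _ h *; rewrite rkK.
have Hmin : forall X : {set 'I_#|S|}, X != set0 ->
  (forall i, i \in X -> i != ir -> (F1 i \in X) && (F2 i \in X)) -> ir \in X.
  move=> X Xn0 Xcl; apply/negPn/negP => nir.
  have : S \subset ev @: X.
    apply: Smin.
    - by apply/subsetP => x /imsetP [i _ ->].
    - case/set0Pn: Xn0 => i iX; apply/set0Pn; exists (ev i); exact: imset_f.
    move=> b /imsetP [i iX ->].
    have iir : i != ir by apply: contraNneq nir => <-.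
    case/andP: (Xcl i iX iir) => h1 h2.
    case: (Hf _ (evP i)) => _ _ h3 h4.
    exists (ev (F1 i)), (ev (F2 i)); split; try exact: imset_f.
      by rewrite evF1 evF2.
    by rewrite evF1 evF2.
  move/subsetP/(_ r rS)/imsetP => [j jX rj].
  by move: nir; rewrite /ir rj evK jX.
pose y i := ev i - r.
have Hy : forall i, \sum_j y j *~ Dm F1 F2 ir i j = 0.
  move=> i; rewrite Dm_row; case: eqP => [->|nir].
    by rewrite /y rkK // subrr.
  rewrite /y evF1 evF2; apply: zm; by case: (Hf _ (evP i)).
have [s sS sr] : exists2 s, s \in S & s != r.
  case: (Hf _ rS) => h1 h2 h3 _.
  have [e1|n1] := eqVneq (f1 r) r; last by exists (f1 r).
  by exists (f2 r) => //; apply: contraNneq h3 => ->; rewrite e1.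
have ys : y (rk s) != 0 by rewrite /y rkK // subr_eq0.
have [n [npos nle ndet]] := Dm_det Hmin.
have := Dm_adj Hy (rk s); rewrite ndet -pmulrn => hn.
exact: leq_trans (order_bound ys npos hn) nle.
Qed.
End Grp.

Lemma min_balanced (G : finZmodType) (B : {set G}) : B != set0 -> balanced B ->
  exists S : {set G}, [/\ S \subset B, S != set0, balanced S &
    forall X : {set G}, X \subset S -> X != set0 -> balanced X -> S \subset X].
Proof.
have [k lek] := ubnP #|B|; elim: k B lek => // k IH B lek Bn0 Bb.
case: (Classical_Prop.classic (exists X : {set G},
   [/\ X \subset B, X != set0, balanced X & ~~ (B \subset X)])).
  case=> X [XB Xn0 Xb nBX].
  have ltX : (#|X| < #|B|)%N by apply: proper_card; rewrite properE XB.
  have [S [SX Sn0 Sb Smin]] := IH X (leq_trans ltX lek) Xn0 Xb.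
  by exists S; split => //; apply: subset_trans SX XB.
move=> H; exists B; split => // X XB Xn0 Xb.
apply/negPn/negP => nBX; apply: H; by exists X.
Qed.

Lemma main_nat (G : finZmodType) (B : {set G}) : B != set0 -> balanced B ->
  (pdiv #|G| <= 2 ^ (#|B|.-1))%N.
Proof.
move=> Bn0 Bb; have [S [SB Sn0 Sb Smin]] := min_balanced Bn0 Bb.
apply: leq_trans (key Sn0 Sb Smin) _; apply: leq_pexp2l => //.
by rewrite -!subn1 leq_sub2r // subset_leq_card.
Qed.

From Stdlib Require Import Reals Lra.

Lemma INR_exp2 k : INR (expn 2 k) = (2 ^ k)%R.
Proof.
elim: k => [|k IH] //; rewrite expnS -[(2 * _)%N]/(Nat.mul 2 (expn 2 k)) mult_INR IH //.
Qed.

Lemma real_part (p k : nat) : (0 < p)%N -> (p <= expn 2 k)%N ->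
  (log2 (INR p) + 1 <= INR k.+1)%R.
Proof.
move=> p0 pk.
have Hp : (0 < INR p)%R by apply: lt_0_INR; apply/ssrnat.ltP.
have Hle : (INR p <= 2 ^ k)%R by rewrite -INR_exp2; apply: le_INR; apply/ssrnat.leP.
have l2 : (0 < ln 2)%R by rewrite -ln_1; apply: ln_increasing; Stdlib.micromega.Lra.lra.
have Hln : (ln (INR p) <= INR k * ln 2)%R.
  rewrite -ln_pow; last by Stdlib.micromega.Lra.lra.
  case: (Rle_lt_or_eq_dec _ _ Hle) => h; last by rewrite h; Stdlib.micromega.Lra.lra.
  by apply: Rlt_le; apply: ln_increasing.
rewrite S_INR /log2; apply: Rplus_le_compat_r.
apply: (Rmult_le_reg_r (ln 2)) => //.
rewrite /Rdiv Rmult_assoc Rinv_l; Stdlib.micromega.Lra.lra.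
Qed.

Theorem corollary4p8 (G : finZmodType) (B : {set G}) :
  (1 < #|G|)%N -> B != set0 -> balanced B ->
  (log2 (INR (pdiv #|G|)) + 1 <= INR #|B|)%R.
Proof.
move=> _ Bn0 Bb.
have := main_nat Bn0 Bb; have : (0 < #|B|)%N by rewrite card_gt0.
case: #|B| => // k _ /= hk.
exact: real_part (pdiv_gt0 _) hk.
Qed.
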